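(* For every number $a$ and every integer $k\geq1$, $$\sum_{r=1}^{k}(-1)^{k-r}\sum_{\substack{k_1+\cdots+k_r=k\\ k_i\geq1}}\ \prod_{i=1}^{r}\frac{a(a-k_i)^{k_i-1}}{k_i!}=\frac{a(a+k)^{k-1}}{k!} \quad\text{and}\quad \sum_{r=1}^{k}(-1)^{k-r}\sum_{\substack{k_1+\cdots+k_r=k\\ k_i\geq1}}\ \prod_{i=1}^{r}\frac{a(a+k_i)^{k_i-1}}{k_i!}=\frac{a(a-k)^{k-1}}{k!},$$ where the inner sums run over all ordered $r$-tuples of positive integers with sum $k$.
   Context: The convention $0^0=1$ is used. *)

(* Defs.v *)
From mathcomp Require Import all_boot all_order all_algebra.
Set Implicit Arguments. Unset Strict Implicit. Unset Printing Implicit Defensive.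
Import Order.TTheory GRing.Theory Num.Theory.
Local Open Scope ring_scope.

(* The set of compositions of k into r parts: r-tuples (k_1,...,k_r) of
   positive integers with k_1 + ... + k_r = k, encoded as finite functions
   'I_r -> 'I_k.+1 (each part is at most k). *)
Definition composition (k r : nat) (t : {ffun 'I_r -> 'I_k.+1}) : bool :=
  [forall i, 0 < (t i : nat)]%N && (\sum_(i < r) (t i : nat) == k)%N.

Definition abel_term (R : numFieldType) (a b : R) (m : nat) : R :=
  a * (a + b * m%:R) ^+ (m.-1) / (m`!)%:R.

Definition alt_comp_sum (R : numFieldType) (a b : R) (k : nat) : R :=
  \sum_(1 <= r < k.+1)
    (-1) ^+ (k - r) *
    \sum_(t : {ffun 'I_r -> 'I_k.+1} | composition t)
       \prod_(i < r) abel_term a b (t i).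

(* Main.v *)
Require Import Defs.
From mathcomp Require Import all_boot all_order all_algebra.
From mathcomp Require Import ring lra zify.
Import Order.TTheory GRing.Theory Num.Theory.
Set Implicit Arguments. Unset Strict Implicit. Unset Printing Implicit Defensive.
Local Open Scope ring_scope.

Lemma pascal_split (R : numFieldType) (n : nat) (f : nat -> R) :
  \sum_(j < n.+2) (-1) ^+ j * 'C(n.+1, j)%:R * f j =
  \sum_(j < n.+1) (-1) ^+ j * 'C(n, j)%:R * f j -
  \sum_(j < n.+1) (-1) ^+ j * 'C(n, j)%:R * f j.+1.
Proof.
rewrite big_ord_recl /= bin0.
under eq_bigr => i _ do rewrite /bump /= binS natrD mulrDr mulrDl.
rewrite big_split /=.
rewrite [\sum_(j < n.+1) (-1) ^+ j * 'C(n, j)%:R * f j]big_ord_recl /= bin0.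
rewrite -addrA; congr (_ + _).
rewrite big_ord_recr /= bin_small // mulr0 mul0r addr0.
rewrite -sumrN; congr (_ + _); apply: eq_bigr => i _.
by rewrite add1n exprS; ring.
Qed.

Definition Sfd (R : numFieldType) (b x : R) (n m : nat) : R :=
  \sum_(j < n.+1) (-1) ^+ j * 'C(n, j)%:R * (x + b * j%:R) ^+ m.

Lemma Sfd_shift (R : numFieldType) (b x : R) n m :
  Sfd b (x + b) n m = \sum_(i < m.+1) 'C(m, i)%:R * b ^+ (m - i) * Sfd b x n i.
Proof.
rewrite /Sfd.
have e j : x + b + b * j%:R = b + (x + b * j%:R) by ring.
under eq_bigr => j _ do rewrite e exprDn mulr_sumr.
rewrite exchange_big /=; apply: eq_bigr => i _.
rewrite mulr_sumr; apply: eq_bigr => j _.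
rewrite mulr_natr; ring.
Qed.

Lemma Sfd0 (R : numFieldType) (b : R) n : forall m, (m < n)%N -> forall x, Sfd b x n m = 0.
Proof.
elim: n => [//|n IH] m hm x.
rewrite /Sfd (pascal_split n (fun j => (x + b * j%:R) ^+ m)) /=.
have -> : \sum_(j < n.+1) (-1) ^+ j * 'C(n, j)%:R * (x + b * j.+1%:R) ^+ m = Sfd b (x + b) n m.
  by apply: eq_bigr => j _; rewrite -[(j : nat).+1]addn1 natrD; congr (_ * _ ^+ _); ring.
rewrite Sfd_shift [\sum_(i < m.+1) _]big_ord_recr /= subnn expr0 binn mulr1 mul1r.
rewrite -/(Sfd b x n m) [\sum_(i < m) _]big1 => [|i _]; first by rewrite add0r subrr.
by rewrite IH ?mulr0 //; have := ltn_ord i; lia.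
Qed.

Lemma deriv_eq (R : numFieldType) (p q : {poly R}) (c : R) :
  p^`() = q^`() -> p.[c] = q.[c] -> p = q.
Proof.
move=> hd hc; apply/eqP; rewrite -subr_eq0; apply/eqP.
set r := p - q.
have dr : r^`() = 0 by rewrite /r raddfB /= hd subrr.
have ci i : r`_i.+1 = 0.
  have := congr1 (fun s : {poly R} => s`_i) dr; rewrite coef_deriv coef0 /=.
  by move/eqP; rewrite mulrn_eq0 /= => /eqP.
have er : r = (r`_0)%:P.
  by apply/polyP => -[|i]; rewrite coefC //= ci.
have : r.[c] = 0 by rewrite /r hornerD hornerN hc subrr.
rewrite {1}er hornerC => h; by rewrite er h polyC0.
Qed.

Lemma sign_sub (R : numFieldType) (N j : nat) : (j <= N)%N ->
  (-1) ^+ (N - j) = (-1) ^+ N * (-1) ^+ j :> R.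
Proof.
move=> hj; rewrite -{2}(subnK hj) exprD -mulrA -exprD addnn -mul2n exprM.
by rewrite sqrrN expr1n expr1n mulr1.
Qed.

Definition Qf (R : numFieldType) (b x : R) (m : nat) : R :=
  if m is m'.+1 then x * (x + b * m'.+1%:R) ^+ m' else 1.

Lemma abel_poly (R : numFieldType) (b x : R) n : forall y : R,
  \sum_(j < n.+1) ('C(n, j)%:R * Qf b x j) *: ('X + (y + b * (n - j)%:R)%:P) ^+ (n - j)
  = ('X + (x + y + b * n%:R)%:P) ^+ n.
Proof.
have dZ (c : R) (m : nat) : (('X + c%:P) ^+ m)^`() = m%:R *: ('X + c%:P) ^+ m.-1.
  by rewrite deriv_exp raddfD /= derivX derivC addr0 mul1r scaler_nat.
elim: n => [|n IH] y.
  by rewrite big_ord1 /= bin0 mul1r scale1r !expr0.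
apply: (@deriv_eq _ _ _ (- (x + y + b * n.+1%:R))).
- rewrite raddf_sum /=.
  under eq_bigr => j _ do rewrite derivZ dZ.
  rewrite dZ big_ord_recr /= subnn scale0r scaler0 addr0.
  have -> : \sum_(j < n.+1) ('C(n.+1, j)%:R * Qf b x j) *:
      ((n.+1 - j)%:R *: ('X + (y + b * (n.+1 - j)%:R)%:P) ^+ (n.+1 - j).-1)
    = n.+1%:R *: \sum_(j < n.+1) ('C(n, j)%:R * Qf b x j) *:
      ('X + (y + b + b * (n - j)%:R)%:P) ^+ (n - j).
    rewrite scaler_sumr; apply: eq_bigr => j _.
    have hj : (j <= n)%N by rewrite -ltnS.
    rewrite subSn //= !scalerA.
    have -> : y + b * (n - j).+1%:R = y + b + b * (n - j)%:R.
      by rewrite -[(n - j).+1]addn1 natrD; ring.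
    congr (_ *: _).
    have := congr1 (fun m => m%:R : R) (mul_bin_down n.+1 j).
    rewrite !natrM subSn //= => e.
    by rewrite [in RHS]mulrA e; ring.
  rewrite IH.
  have -> : x + (y + b) + b * n%:R = x + y + b * n.+1%:R.
    by rewrite -[n.+1]addn1 natrD; ring.
  by [].
- rewrite horner_sum horner_exp hornerD hornerX hornerC addNr expr0n /=.
  under eq_bigr => j _ do rewrite hornerZ horner_exp hornerD hornerX hornerC.
  rewrite (eq_bigr (fun j : 'I_n.+2 => (-1) ^+ n.+1 * x *
      ((-1) ^+ j * 'C(n.+1, j)%:R * (x + b * j%:R) ^+ n))).
    by rewrite -mulr_sumr -/(Sfd b x n.+1 n) Sfd0 // mulr0.
  move=> [j hj] _ /=.
  have hj' : (j <= n.+1)%N by [].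
  have -> : - (x + y + b * n.+1%:R) + (y + b * (n.+1 - j)%:R) = -1 * (x + b * j%:R).
    by rewrite natrB //; ring.
  rewrite exprMn sign_sub //.
  case: j hj hj' => [|j] _ hj' /=.
    by rewrite bin0 subn0 mulr0 addr0 [x ^+ n.+1]exprS; ring.
  have e : (x + b * j.+1%:R) ^+ n =
      (x + b * j.+1%:R) ^+ j * (x + b * j.+1%:R) ^+ (n.+1 - j.+1).
    by rewrite -exprD; congr (_ ^+ _); lia.
  rewrite e; ring.
Qed.

Lemma abel_val (R : numFieldType) (b x : R) n y :
  \sum_(j < n.+1) 'C(n, j)%:R * Qf b x j * (y + b * (n - j)%:R) ^+ (n - j)
  = (x + y + b * n%:R) ^+ n.
Proof.
have := congr1 (horner^~ 0) (abel_poly b x n y).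
rewrite /= horner_sum horner_exp hornerD hornerX hornerC add0r => <-.
apply: eq_bigr => j _.
by rewrite hornerZ horner_exp hornerD hornerX hornerC add0r.
Qed.

Lemma Qf_split (R : numFieldType) (b y : R) m :
  Qf b y m = (y + b * m%:R) ^+ m - b * m%:R * (y + b * m%:R) ^+ m.-1.
Proof.
case: m => [|m] /=; first by rewrite mulr0 mul0r subr0 expr0.
by rewrite exprS; ring.
Qed.

Lemma abel2 (R : numFieldType) (b x y : R) n :
  \sum_(j < n.+1) 'C(n, j)%:R * Qf b x j * Qf b y (n - j) = Qf b (x + y) n.
Proof.
case: n => [|n]; first by rewrite big_ord1 /= bin0 !mul1r.
under eq_bigr => j _ do rewrite (Qf_split b y) mulrBr.
rewrite sumrB abel_val big_ord_recr /= subnn mulr0 mul0r mulr0 addr0.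
have -> : \sum_(i < n.+1) 'C(n.+1, i)%:R * Qf b x i *
      (b * (n.+1 - i)%:R * (y + b * (n.+1 - i)%:R) ^+ (n.+1 - i).-1)
    = b * n.+1%:R * \sum_(j < n.+1) 'C(n, j)%:R * Qf b x j *
      (y + b + b * (n - j)%:R) ^+ (n - j).
  rewrite mulr_sumr; apply: eq_bigr => j _.
  have hj : (j <= n)%N by rewrite -ltnS.
  rewrite subSn //=.
  have -> : y + b * (n - j).+1%:R = y + b + b * (n - j)%:R.
    by rewrite -[(n - j).+1]addn1 natrD; ring.
  have := congr1 (fun m => m%:R : R) (mul_bin_down n.+1 j).
  rewrite !natrM subSn //= => e.
  have -> : 'C(n.+1, j)%:R * Qf b x j * (b * (n - j).+1%:R *
     (y + b + b * (n - j)%:R) ^+ (n - j)) =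
     b * ((n - j).+1%:R * 'C(n.+1, j)%:R) * Qf b x j * (y + b + b * (n - j)%:R) ^+ (n - j) by ring.
  by rewrite -e; ring.
rewrite abel_val /=.
have -> : x + (y + b) + b * n%:R = x + y + b * n.+1%:R.
  by rewrite -[n.+1]addn1 natrD; ring.
by rewrite exprS; ring.
Qed.

Lemma conv0 (R : numFieldType) (b a : R) i : (0 < i)%N ->
  \sum_(j < i.+1) (Qf b a j / (j`!)%:R) * (Qf b (- a) (i - j) / ((i - j)`!)%:R) = 0.
Proof.
move=> hi.
have fne m : (m`!)%:R != 0 :> R by rewrite pnatr_eq0 -lt0n fact_gt0.
rewrite (eq_bigr (fun j : 'I_i.+1 => ((i`!)%:R)^-1 *
   ('C(i, j)%:R * Qf b a j * Qf b (- a) (i - j)))).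
  rewrite -mulr_sumr abel2 addrN.
  by case: i hi => //= i _; rewrite !mul0r mulr0.
move=> j _.
have hj : (j <= i)%N by rewrite -ltnS.
have := congr1 (fun m => m%:R : R) (bin_fact hj).
rewrite !natrM => e.
rewrite -e.
have := fne j; have := fne (i - j)%N.
move: ((j`!)%:R) (((i - j)%N`!)%:R) => u v hv hu.
by field; rewrite hv hu pnatr_eq0 -lt0n bin_gt0.
Qed.

Lemma prod_scaleX (R : numFieldType) (I : Type) (s : seq I) (f : I -> R) (g : I -> nat) :
  \prod_(i <- s) (f i *: 'X^(g i)) = (\prod_(i <- s) f i) *: 'X^(\sum_(i <- s) g i) :> {poly R}.
Proof.
elim: s => [|i s IH]; first by rewrite !big_nil scale1r expr0.
by rewrite !big_cons IH exprD -scalerAl -scalerAr scalerA.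
Qed.

Lemma comp_coef (R : numFieldType) (k r : nat) (c : nat -> R) :
  \sum_(t : {ffun 'I_r -> 'I_k.+1} | composition t) \prod_(i < r) c (t i)
  = ((\poly_(m < k.+1) (if m == 0%N then 0 else c m)) ^+ r)`_k.
Proof.
have -> : (\poly_(m < k.+1) (if m == 0%N then 0 else c m)) ^+ r =
   \prod_(i < r) \sum_(m < k.+1) ((if (m : nat) == 0%N then 0 else c m) *: 'X^m).
  by rewrite prodr_const card_ord poly_def.
rewrite bigA_distr_bigA coef_sum big_mkcond /=; apply: eq_bigr => t _.
rewrite prod_scaleX coefZ coefXn /composition.
case: (boolP [forall i, 0 < t i]%N) => hpos /=.
  case: (boolP (\sum_(i < r) (t i : nat) == k)%N) => hs /=.
    rewrite eq_sym hs mulr1; apply: eq_bigr => i _.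
    by have := forallP hpos i; rewrite lt0n => /negPf ->.
  by rewrite eq_sym (negPf hs) mulr0.
move/forallPn: hpos => [i hi].
by rewrite (bigD1 i) //= lt0n negbK in hi *; rewrite hi mul0r mul0r.
Qed.

Lemma lowzero_mul (R : numFieldType) (p q : {poly R}) k :
  (forall i, (i <= k)%N -> p`_i = 0) -> (p * q)`_k = 0.
Proof.
move=> hp; rewrite coefM big1 // => j _; rewrite hp ?mul0r //.
by rewrite -ltnS.
Qed.

Lemma pow_low (R : numFieldType) (p : {poly R}) : p`_0 = 0 ->
  forall n i, (i < n)%N -> (p ^+ n)`_i = 0.
Proof.
move=> h0; elim=> [//|n IH] i hi.
rewrite exprS coefM big1 // => j _.
have [->|jn] := eqVneq (j : nat) 0%N; first by rewrite h0 mul0r.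
rewrite IH ?mulr0 //.
have := ltn_ord j; move: jn; lia.
Qed.

Lemma main_gen (R : numFieldType) (a b : R) k : (0 < k)%N ->
  alt_comp_sum a b k = a * (a - b * k%:R) ^+ k.-1 / (k`!)%:R.
Proof.
move=> hk.
set P : {poly R} := \poly_(m < k.+1) (if m == 0%N then 0 else abel_term a b m).
set Q : {poly R} := \poly_(m < k.+1)
   (if m == 0%N then 0 else Qf b (- a) m / (m`!)%:R).
have cP j : (j <= k)%N -> (1 + P)`_j = Qf b a j / (j`!)%:R.
  move=> hj; rewrite coefD coef1 coef_poly ltnS hj.
  by case: j hj => [|j] _ /=; rewrite ?addr0 ?add0r ?divr1.
have cQ j : (j <= k)%N -> (1 + Q)`_j = Qf b (- a) j / (j`!)%:R.
  move=> hj; rewrite coefD coef1 coef_poly ltnS hj.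
  by case: j hj => [|j] _ /=; rewrite ?addr0 ?add0r ?divr1.
have step1 : alt_comp_sum a b k =
    \sum_(0 <= r < k.+1) (-1) ^+ (k - r) * (P ^+ r)`_k.
  rewrite /alt_comp_sum [in RHS]big_ltn // expr0 coef1.
  have -> : (k == 0%N) = false by apply/negbTE; rewrite -lt0n.
  rewrite mulr0 add0r; apply: eq_bigr => r _; congr (_ * _).
  exact: comp_coef.
set S := \sum_(r < k.+1) (- P) ^+ r.
have step2 : alt_comp_sum a b k = (-1) ^+ k * S`_k.
  rewrite step1 big_mkord coef_sum mulr_sumr; apply: eq_bigr => r _.
  have hr : (r <= k)%N by rewrite -ltnS.
  rewrite -scaleN1r exprZn coefZ sign_sub //; ring.
have hS : (1 + P) * S = 1 - (- P) ^+ k.+1.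
  have := subrX1 (- P) k.+1.
  rewrite (_ : - P - 1 = - (1 + P)); last by rewrite opprD addrC.
  by rewrite mulNr => e; rewrite -[(1 + P) * S]opprK -e opprB.
set E := (1 + P) * (1 + Q) - 1.
have hE i : (i <= k)%N -> E`_i = 0.
  move=> hi; rewrite /E coefB coef1 coefM.
  case: i hi => [|i] hi.
    by rewrite big_ord1 cP // cQ // /= !divr1 mulr1 subrr.
  rewrite /= subr0 -[RHS](conv0 b a (ltn0Sn i)); apply: eq_bigr => j _.
  have hj : (j <= i.+1)%N by rewrite -ltnS.
  rewrite cP ?cQ //; lia.
have eS : S = (1 - (- P) ^+ k.+1) * (1 + Q) - S * E.
  by rewrite -hS /E; ring.
have hSk : S`_k = Qf b (- a) k / (k`!)%:R.
  have hPk i : (i <= k)%N -> ((- P) ^+ k.+1)`_i = 0.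
    move=> hi; apply: pow_low => //.
    by rewrite coefN coef_poly /= oppr0.
  rewrite eS coefB mulrBl coefB mul1r cQ // [S * E]mulrC.
  by rewrite (lowzero_mul _ hE) (lowzero_mul _ hPk) !subr0.
rewrite step2 hSk.
case: k hk {P Q cP cQ step1 S step2 hS E hE eS hSk} => [//|k] _ /=.
have -> : (a - b * k.+1%:R) ^+ k = (-1) ^+ k * (- a + b * k.+1%:R) ^+ k.
  by rewrite -exprMn; congr (_ ^+ _); ring.
by rewrite exprS; ring.
Qed.

Theorem mainTheorem10 (R : numFieldType) (a : R) (k : nat) (hk : (1 <= k)%N) :
  alt_comp_sum a (-1) k = a * (a + k%:R) ^+ k.-1 / (k`!)%:R /\
  alt_comp_sum a 1 k = a * (a - k%:R) ^+ k.-1 / (k`!)%:R.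
Proof.
by rewrite !main_gen // mulN1r opprK mul1r.
Qed.
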